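(* For any $n<\omega$, a partial type $p(x)$ has dp-rank $\le n$ if and only if, for every formula $\varphi(x;y)$, the local dp-rank of $\varphi$ with respect to $p$ is $\le n$.
   Context: $T$ is a complete first-order theory and $\mathfrak{C}$ a monster model; $\mathfrak{C}_y$ denotes the $|y|$-tuples from $\mathfrak{C}$. ''Indiscernible sequence'' means an order-indiscernible (over $\emptyset$) sequence. For $C\subseteq\mathbb{R}$, $\sim_C$ is the equivalence relation on $\mathbb{Q}$ given by $i\sim_C j$ iff for all $c\in C$, ($c\le i \Leftrightarrow c\le j$) and ($i\le c\Leftrightarrow j\le c$). A partial type $p(x)$ has dp-rank $\le n$ if for every $a\models p$ and every indiscernible sequence $\langle b_i: i\in\mathbb{Q}\rangle$ (of tuples of any finite length) there is $C\subseteq\mathbb{R}$ with $|C|\le n$ such that for all $i,j\in\mathbb{Q}$ with $i\sim_C j$, $\mathrm{tp}(b_i/a)=\mathrm{tp}(b_j/a)$. The local dp-rank of a formula $\varphi(x;y)$ with respect to $p$ is $\le n$ if for every $a\models p$ and every indiscernible sequence $\langle b_i: i\in\mathbb{Q}\rangle$ in $\mathfrak{C}_y$ there is $C\subseteq\mathbb{R}$ with $|C|\le n$ such that for all $i,j\in\mathbb{Q}$ with $i\sim_C j$, $\models \varphi(a;b_i)\leftrightarrow\varphi(a;b_j)$. *)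

(* Defs.v *)
From Stdlib Require Import Reals QArith Qcanon Qreals List Arith.
From Stdlib Require Fin.
Import ListNotations.
Local Open Scope nat_scope.

Record Lang : Type := {
  fsym : Type;  fun_ar : fsym -> nat;
  rsym : Type;  rel_ar : rsym -> nat }.

Inductive term (L : Lang) : Type :=
| tvar : nat -> term L
| tapp : forall f : fsym L, (Fin.t (fun_ar L f) -> term L) -> term L.
Arguments tvar {L} _.
Arguments tapp {L} f _.

(* Variable 0 is bound by the innermost quantifier (de Bruijn indices). *)
Inductive formula (L : Lang) : Type :=
| FEq  : term L -> term L -> formula L
| FRel : forall r : rsym L, (Fin.t (rel_ar L r) -> term L) -> formula L
| FNeg : formula L -> formula L
| FAnd : formula L -> formula L -> formula L
| FOr  : formula L -> formula L -> formula L
| FAll : formula L -> formula L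
| FEx  : formula L -> formula L.
Arguments FEq {L} _ _.  Arguments FRel {L} r _.  Arguments FNeg {L} _.
Arguments FAnd {L} _ _. Arguments FOr {L} _ _.  Arguments FAll {L} _.
Arguments FEx {L} _.

Record Structure (L : Lang) : Type := {
  dom  :> Type;
  funs : forall f : fsym L, (Fin.t (fun_ar L f) -> dom) -> dom;
  rels : forall r : rsym L, (Fin.t (rel_ar L r) -> dom) -> Prop }.
Arguments funs {L} _ f _.
Arguments rels {L} _ r _.

Definition scons {A : Type} (d : A) (e : nat -> A) : nat -> A :=
  fun i => match i with 0 => d | S i' => e i' end.

Fixpoint teval {L} (M : Structure L) (e : nat -> M) (t : term L) : M :=
  match t with
  | tvar i => e i
  | tapp f ts => funs M f (fun j => teval M e (ts j))
  end.

Fixpoint sat {L} (M : Structure L) (e : nat -> M) (phi : formula L) : Prop :=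
  match phi with
  | FEq t1 t2 => teval M e t1 = teval M e t2
  | FRel r ts => rels M r (fun j => teval M e (ts j))
  | FNeg p => ~ sat M e p
  | FAnd p q => sat M e p /\ sat M e q
  | FOr p q => sat M e p \/ sat M e q
  | FAll p => forall d : M, sat M (scons d e) p
  | FEx p => exists d : M, sat M (scons d e) p
  end.

Fixpoint tbound {L} (N : nat) (t : term L) : Prop :=
  match t with
  | tvar i => i < N
  | tapp f ts => forall j, tbound N (ts j)
  end.

Fixpoint fbound {L} (N : nat) (phi : formula L) : Prop :=
  match phi with
  | FEq t1 t2 => tbound N t1 /\ tbound N t2
  | FRel r ts => forall j, tbound N (ts j)
  | FNeg p => fbound N p
  | FAnd p q | FOr p q => fbound N p /\ fbound N q
  | FAll p | FEx p => fbound (S N) p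
  end.

(** Tuples are functions nat -> M of which only the first (length) entries
    matter.  [env k a c] places the k-tuple a in variables 0..k-1 and c
    in variables k, k+1, ... *)
Definition env {A : Type} (k : nat) (a c : nat -> A) : nat -> A :=
  fun i => if i <? k then a i else c (i - k).

(** Partial types p(x), |x| = k, with parameters from M: a set of pairs
    (psi, c), psi a formula whose variables 0..k-1 are x and whose remaining
    variables are instantiated by the parameters c. *)
Definition ptype {L} (M : Structure L) : Type := formula L -> (nat -> M) -> Prop.

Definition realizes {L} (M : Structure L) (k : nat) (p : ptype M) (a : nat -> M) : Prop :=
  forall psi c, p psi c -> sat M (env k a c) psi.

Definition seq_env {L} (M : Structure L) (m : nat) (I : nat -> Qc)
  (b : Qc -> nat -> M) : nat -> M :=
  fun l => b (I (l / m)) (l mod m).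

Definition increasing_upto (N : nat) (I : nat -> Qc) : Prop :=
  forall s t, s < t -> t < N -> Qclt (I s) (I t).

Definition indiscernible {L} (M : Structure L) (m : nat) (b : Qc -> nat -> M) : Prop :=
  forall (N : nat) (psi : formula L), fbound (N * m) psi ->
  forall I J : nat -> Qc, increasing_upto N I -> increasing_upto N J ->
  (sat M (seq_env M m I b) psi <-> sat M (seq_env M m J b) psi).

Definition QcR (q : Qc) : R := Q2R (this q).

Definition simC (C : list R) (i j : Qc) : Prop :=
  forall c, In c C ->
    ((c <= QcR i)%R <-> (c <= QcR j)%R) /\ ((QcR i <= c)%R <-> (QcR j <= c)%R).

Definition same_type {L} (M : Structure L) (k m : nat) (a bi bj : nat -> M) : Prop :=
  forall psi : formula L, fbound (k + m) psi ->
    (sat M (env k a bi) psi <-> sat M (env k a bj) psi).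

Definition dp_rank_le {L} (M : Structure L) (k : nat) (p : ptype M) (n : nat) : Prop :=
  forall a : nat -> M, realizes M k p a ->
  forall (m : nat) (b : Qc -> nat -> M), indiscernible M m b ->
  exists C : list R, length C <= n /\
    forall i j : Qc, simC C i j -> same_type M k m a (b i) (b j).

Definition local_dp_rank_le {L} (M : Structure L) (k m : nat) (phi : formula L)
  (p : ptype M) (n : nat) : Prop :=
  forall a : nat -> M, realizes M k p a ->
  forall b : Qc -> nat -> M, indiscernible M m b ->
  exists C : list R, length C <= n /\
    forall i j : Qc, simC C i j ->
      (sat M (env k a (b i)) phi <-> sat M (env k a (b j)) phi).

(* Main.v *)
Require Import Defs.
From Stdlib Require Import Reals QArith Qcanon Qreals List Arith.
From Stdlib Require Import Lia Lra Classical ClassicalEpsilon FunctionalExtensionality.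
Import ListNotations.

Open Scope nat_scope.

Section Syn.
Context {L : Lang}.

Fixpoint trename (s : nat -> nat) (t : term L) : term L :=
  match t with
  | tvar i => tvar (s i)
  | tapp f ts => tapp f (fun j => trename s (ts j))
  end.

Definition upr (s : nat -> nat) : nat -> nat :=
  fun i => match i with 0 => 0 | S i' => S (s i') end.

Fixpoint frename (s : nat -> nat) (phi : formula L) : formula L :=
  match phi with
  | FEq t1 t2 => FEq (trename s t1) (trename s t2)
  | FRel r ts => FRel r (fun j => trename s (ts j))
  | FNeg p => FNeg (frename s p)
  | FAnd p q => FAnd (frename s p) (frename s q)
  | FOr p q => FOr (frename s p) (frename s q)
  | FAll p => FAll (frename (upr s) p)
  | FEx p => FEx (frename (upr s) p)
  end.

Lemma teval_rename (M : Structure L) t : forall s (e : nat -> M),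
  teval M e (trename s t) = teval M (fun i => e (s i)) t.
Proof.
  induction t as [i|f ts IH]; intros s e; simpl; auto.
  f_equal. apply functional_extensionality. intro j. apply IH.
Qed.

Lemma sat_rename (M : Structure L) phi : forall s (e : nat -> M),
  sat M e (frename s phi) <-> sat M (fun i => e (s i)) phi.
Proof.
  induction phi; intros s e; simpl.
  - rewrite !teval_rename. tauto.
  - replace (fun j => teval M e (trename s (t j))) with (fun j => teval M (fun i => e (s i)) (t j)).
    tauto. apply functional_extensionality; intro j; now rewrite teval_rename.
  - rewrite IHphi; tauto.
  - rewrite IHphi1, IHphi2; tauto.
  - rewrite IHphi1, IHphi2; tauto.
  - split; intros H d; specialize (H d); rewrite IHphi in *;
    (replace (fun i => scons d e (upr s i)) with (scons d (fun i => e (s i))) in *;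
     [exact H| apply functional_extensionality; intros [|i]; reflexivity]).
  - split; intros [d H]; exists d; rewrite IHphi in *;
    (replace (fun i => scons d e (upr s i)) with (scons d (fun i => e (s i))) in *;
     [exact H| apply functional_extensionality; intros [|i]; reflexivity]).
Qed.

Lemma teval_agree (M : Structure L) t : forall N (e e' : nat -> M),
  tbound N t -> (forall v, v < N -> e v = e' v) -> teval M e t = teval M e' t.
Proof.
  induction t as [i|f ts IH]; intros N e e' Hb He; simpl in *; auto.
  f_equal. apply functional_extensionality. intro j. eapply IH; eauto.
Qed.

Lemma sat_agree (M : Structure L) phi : forall N (e e' : nat -> M),
  fbound N phi -> (forall v, v < N -> e v = e' v) -> (sat M e phi <-> sat M e' phi).
Proof.
  induction phi; intros N e e' Hb He; simpl in *.
  - destruct Hb. rewrite (teval_agree M t N e e'), (teval_agree M t0 N e e'); tauto.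
  - replace (fun j => teval M e (t j)) with (fun j => teval M e' (t j)). tauto.
    apply functional_extensionality; intro j; symmetry; eapply teval_agree; eauto.
  - rewrite (IHphi N e e'); tauto.
  - destruct Hb. rewrite (IHphi1 N e e'), (IHphi2 N e e'); tauto.
  - destruct Hb. rewrite (IHphi1 N e e'), (IHphi2 N e e'); tauto.
  - split; intros H d; specialize (H d);
    (eapply (IHphi (S N)); [eauto| |exact H]); intros [|v] Hv; simpl; auto;
    first [apply He; lia | symmetry; apply He; lia].
  - split; intros [d H]; exists d;
    (eapply (IHphi (S N)); [eauto| |exact H]); intros [|v] Hv; simpl; auto;
    first [apply He; lia | symmetry; apply He; lia].
Qed.

Lemma tbound_rename t : forall s N N', tbound N t -> (forall v, v < N -> s v < N') ->
  tbound N' (trename s t).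
Proof. induction t as [i|f ts IH]; intros s N N' Hb Hs; simpl in *; eauto. Qed.

Lemma fbound_rename phi : forall s N N', fbound N phi -> (forall v, v < N -> s v < N') ->
  fbound N' (frename s phi).
Proof.
  induction phi; intros s N N' Hb Hs; simpl in *;
  try (destruct Hb; split); eauto using tbound_rename;
  try (intro j; eapply tbound_rename; eauto; fail);
  (eapply IHphi; eauto; intros [|v] Hv; simpl; [lia|]; specialize (Hs v); lia).
Qed.

End Syn.

Open Scope R_scope.

Lemma QcR_Q2Qc x : QcR (Q2Qc x) = Q2R x.
Proof. unfold QcR. simpl. apply Qeq_eqR. apply Qred_correct. Qed.

Lemma Qclt_R (x y : Qc) : QcR x < QcR y -> Qclt x y.
Proof. intro H. unfold Qclt. apply Rlt_Qlt. exact H. Qed.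

Lemma Q2R_inject n : Q2R (inject_Z (Z.of_nat n)) = INR n.
Proof. unfold Q2R, inject_Z; simpl. rewrite INR_IZR_INZ. simpl. lra. Qed.

Lemma Q2R_1 : Q2R 1 = 1.
Proof. unfold Q2R; simpl. lra. Qed.

Lemma simC_eq C i j : QcR i = QcR j -> simC C i j.
Proof. intros H c _. rewrite H. tauto. Qed.

Lemma simC_sep C i j :
  (forall c, In c C -> (c < QcR i /\ c < QcR j) \/ (QcR i < c /\ QcR j < c)) -> simC C i j.
Proof. intros H c Hc. specialize (H c Hc). split; split; intro; lra. Qed.

Lemma not_simC C i j : ~ simC C i j ->
  exists c, In c C /\ ((QcR i <= c <= QcR j) \/ (QcR j <= c <= QcR i)).
Proof.
  intro H. apply NNPP. intro H'. apply H. apply simC_sep. intros c Hc.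
  destruct (Rlt_le_dec c (QcR i)); destruct (Rlt_le_dec c (QcR j));
  destruct (Rlt_le_dec (QcR i) c); destruct (Rlt_le_dec (QcR j) c);
  try lra; exfalso; apply H'; exists c; split; auto; lra.
Qed.

Lemma simC_between C i j : simC C i j -> QcR i < QcR j ->
  forall c, In c C -> c < QcR i \/ QcR j < c.
Proof.
  intros H Hlt c Hc. destruct (H c Hc) as [[H1 H2] [H3 H4]].
  destruct (Rlt_le_dec c (QcR i)); auto.
  destruct (Rlt_le_dec (QcR j) c); auto.
  assert (c <= QcR i) by (apply H2; lra). assert (QcR j <= c) by (apply H3; lra). lra.
Qed.

Lemma simC_sym C i j : simC C i j -> simC C j i.
Proof. intros H c Hc. specialize (H c Hc). tauto. Qed.

Lemma Q_dense (x y : R) : x < y -> exists q : Q, x < Q2R q < y.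
Proof.
  intro H.
  destruct (archimed (/ (y - x))) as [Hn _].
  set (z := up (/ (y - x))) in *.
  assert (Hz : (0 < z)%Z).
  { apply lt_IZR. assert (0 < / (y - x)) by (apply Rinv_0_lt_compat; lra). simpl; lra. }
  destruct (archimed (x * IZR z)) as [H1 H2].
  exists (up (x * IZR z) # Z.to_pos z).
  unfold Q2R; simpl. rewrite Z2Pos.id by lia.
  assert (HzR : 0 < IZR z) by (apply IZR_lt; lia).
  assert (Hyx : (y - x) * IZR z > 1).
  { assert (/ (y - x) * (y - x) = 1) by (field; lra).
    assert (0 < y - x) by lra. nra. }
  split.
  - apply (Rmult_lt_reg_r (IZR z)); auto. rewrite Rmult_assoc, Rinv_l by lra. lra.
  - apply (Rmult_lt_reg_r (IZR z)); auto. rewrite Rmult_assoc, Rinv_l by lra. lra.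
Qed.

Lemma Qc_dense (x y : R) : x < y -> exists q : Qc, x < QcR q < y.
Proof. intro H. destruct (Q_dense x y H) as [q Hq]. exists (Q2Qc q). now rewrite QcR_Q2Qc. Qed.

Definition Gq (x : Q) : Q := if Qle_bool 0 x then x / (1 + x) else x / (1 - x).
Definition Gr (y : R) : R := if Rle_dec 0 y then y / (1 + y) else y / (1 - y).

Lemma Q2R_Gq x : Q2R (Gq x) = Gr (Q2R x).
Proof.
  unfold Gq, Gr. destruct (Qle_bool 0 x) eqn:E.
  - apply Qle_bool_iff in E. apply Qle_Rle in E. replace (Q2R 0) with 0 in E by (unfold Q2R; simpl; lra).
    destruct (Rle_dec 0 (Q2R x)); [|lra].
    rewrite Q2R_div. rewrite Q2R_plus, Q2R_1. reflexivity.
    intro Hq. apply Qeq_eqR in Hq. rewrite Q2R_plus, Q2R_1 in Hq. unfold Q2R in Hq at 2; simpl in Hq. lra.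
  - assert (~ (0 <= x)%Q) by (intro Hq; apply Qle_bool_iff in Hq; congruence).
    assert (Q2R x < 0). { apply Qnot_le_lt in H. apply Qlt_Rlt in H. unfold Q2R at 2 in H; simpl in H; lra. }
    destruct (Rle_dec 0 (Q2R x)); [lra|].
    rewrite Q2R_div. rewrite Q2R_minus, Q2R_1. reflexivity.
    intro Hq. apply Qeq_eqR in Hq. rewrite Q2R_minus, Q2R_1 in Hq. unfold Q2R in Hq at 2; simpl in Hq. lra.
Qed.

Lemma Gr_bounds y : -1 < Gr y < 1.
Proof.
  unfold Gr; destruct (Rle_dec 0 y).
  - assert (y / (1 + y) * (1 + y) = y) by (field; lra). nra.
  - assert (y / (1 - y) * (1 - y) = y) by (field; lra). nra.
Qed.

Lemma Gr_mono y1 y2 : y1 < y2 -> Gr y1 < Gr y2.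
Proof.
  intro H. unfold Gr; destruct (Rle_dec 0 y1); destruct (Rle_dec 0 y2); try lra.
  - assert (E : y2 / (1 + y2) - y1 / (1 + y1) = (y2 - y1) / ((1 + y1) * (1 + y2))) by (field; lra).
    assert (0 < (y2 - y1) / ((1 + y1) * (1 + y2))) by (apply Rdiv_lt_0_compat; nra). lra.
  - assert (E : y2 / (1 + y2) - y1 / (1 - y1) = (y2 - y1 - 2 * y1 * y2) / ((1 - y1) * (1 + y2))) by (field; lra).
    assert (0 < (y2 - y1 - 2 * y1 * y2) / ((1 - y1) * (1 + y2))) by (apply Rdiv_lt_0_compat; nra). lra.
  - assert (E : y2 / (1 - y2) - y1 / (1 - y1) = (y2 - y1) / ((1 - y1) * (1 - y2))) by (field; lra).
    assert (0 < (y2 - y1) / ((1 - y1) * (1 - y2))) by (apply Rdiv_lt_0_compat; nra). lra.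
Qed.

Lemma Gr_big y : 9 <= y -> 9/10 <= Gr y.
Proof.
  intro H. unfold Gr; destruct (Rle_dec 0 y); try lra.
  assert (y / (1 + y) * (1 + y) = y) by (field; lra). nra.
Qed.

Lemma Gr_small y : y <= -9 -> Gr y <= - (9/10).
Proof.
  intro H. unfold Gr; destruct (Rle_dec 0 y); try lra.
  assert (y / (1 - y) * (1 - y) = y) by (field; lra). nra.
Qed.

Lemma Gr_0 : Gr 0 = 0.
Proof. unfold Gr; destruct (Rle_dec 0 0); [field|lra]. Qed.
Lemma Gr_1 : Gr 1 = 1/2.
Proof. unfold Gr; destruct (Rle_dec 0 1); [field|lra]. Qed.
Lemma Gr_m1 : Gr (-1) = -(1/2).
Proof. unfold Gr; destruct (Rle_dec 0 (-1)); [lra|field]. Qed.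

Open Scope nat_scope.

Section Gen.
Context {L : Lang} (M : Structure L).

Definition FFalse : formula L := FNeg (FAll (FEq (tvar 0) (tvar 0))).
Definition Fxor (p q : formula L) : formula L := FOr (FAnd p (FNeg q)) (FAnd (FNeg p) q).

Fixpoint PsiN (g : nat -> formula L) (N : nat) : formula L :=
  match N with 0 => FFalse | S N => Fxor (PsiN g N) (g N) end.

Lemma PsiN_bound g N B : (forall l, l < N -> fbound B (g l)) -> fbound B (PsiN g N).
Proof.
  induction N; intros H; simpl.
  - lia.
  - repeat split; try apply IHN; try apply H; intros; try apply H; lia.
Qed.

Lemma PsiN_diff (e1 e2 : nat -> M) g j N :
  (forall l, l < N -> l <> j -> (sat M e1 (g l) <-> sat M e2 (g l))) ->
  (j < N -> ~ (sat M e1 (g j) <-> sat M e2 (g j))) ->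
  (j < N -> ~ (sat M e1 (PsiN g N) <-> sat M e2 (PsiN g N))) /\
  (N <= j -> (sat M e1 (PsiN g N) <-> sat M e2 (PsiN g N))).
Proof.
  induction N; intros H1 H2; simpl.
  - split; intros; [lia|]. split; intros Hf; exfalso; apply Hf; intro d; reflexivity.
  - destruct IHN as [IA IB].
    + intros l Hl Hlj; apply H1; lia.
    + intros Hj; apply H2; lia.
    + split.
      * intro Hj. destruct (Nat.eq_dec j N) as [->|Hne].
        -- specialize (IB (Nat.le_refl N)). specialize (H2 (Nat.lt_succ_diag_r N)).
           intro Hc. apply H2. split; intro Hs;
           destruct (classic (sat M e1 (PsiN g N))); destruct (classic (sat M e2 (PsiN g N)));
           destruct (classic (sat M e1 (g N))); destruct (classic (sat M e2 (g N))); tauto.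
        -- assert (Hl : j < N) by lia. specialize (IA Hl).
           assert (HN := H1 N (Nat.lt_succ_diag_r N) (not_eq_sym Hne)).
           intro Hc. apply IA. split; intro Hs;
           destruct (classic (sat M e1 (PsiN g N))); destruct (classic (sat M e2 (PsiN g N)));
           destruct (classic (sat M e1 (g N))); destruct (classic (sat M e2 (g N))); tauto.
      * intro Hj. assert (HN := H1 N (Nat.lt_succ_diag_r N) ltac:(lia)).
        specialize (IB ltac:(lia)).
        destruct (classic (sat M e1 (PsiN g N))); destruct (classic (sat M e2 (PsiN g N)));
        destruct (classic (sat M e1 (g N))); destruct (classic (sat M e2 (g N))); tauto.
Qed.

Lemma divmod_unique (d l s : nat) : s < d -> (l * d + s) / d = l /\ (l * d + s) mod d = s.
Proof.
  intro H. split.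
  - rewrite Nat.add_comm, Nat.div_add by lia. rewrite Nat.div_small by lia. lia.
  - rewrite Nat.add_comm, Nat.Div0.mod_add. apply Nat.mod_small; lia.
Qed.

Lemma indisc_blocks (m : nat) (Hm : 0 < m) (b : Qc -> nat -> M)
  (Hb : indiscernible M m b) (K : nat) (h : nat -> Qc -> Qc)
  (Hinc : forall l q q', l < K -> Qclt q q' -> Qclt (h l q) (h l q'))
  (Hsep : forall l l' q q', l < l' -> l' < K -> Qclt (h l q) (h l' q')) :
  indiscernible M (K * m) (fun q t => b (h (t / m) q) (t mod m)).
Proof.
  intros N psi Hpsi I J HI HJ.
  destruct (Nat.eq_dec K 0) as [HK|HK].
  { subst K. simpl in *.
    rewrite Nat.mul_0_r in Hpsi.
    eapply sat_agree; [exact Hpsi| intros v Hv; lia]. }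
  set (Km := K * m).
  set (tau := fun v => ((v mod Km) / m * N + v / Km) * m + (v mod Km) mod m).
  set (Is := fun (I : nat -> Qc) t => h (t / N) (I (t mod N))).
  assert (Hdec : forall v, v < N * Km -> exists s l r, s < N /\ l < K /\ r < m /\
             v = Km * s + (m * l + r) /\ v / Km = s /\ v mod Km = m * l + r /\
             (m * l + r) / m = l /\ (m * l + r) mod m = r).
  { intros v Hv. assert (HKm : 0 < Km) by (unfold Km; nia).
    exists (v / Km), ((v mod Km) / m), ((v mod Km) mod m).
    assert (Hs : v / Km < N) by (apply Nat.Div0.div_lt_upper_bound; lia).
    assert (Hmod : v mod Km < Km) by (apply Nat.mod_upper_bound; lia).
    assert (Hl : (v mod Km) / m < K) by (apply Nat.Div0.div_lt_upper_bound; unfold Km in *; lia).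
    assert (Hr : (v mod Km) mod m < m) by (apply Nat.mod_upper_bound; lia).
    repeat split; auto.
    - rewrite <- Nat.div_mod by lia. apply Nat.div_mod; lia.
    - rewrite <- Nat.div_mod by lia. reflexivity.
    - rewrite <- Nat.div_mod by lia. reflexivity.
    - rewrite <- Nat.div_mod by lia. reflexivity. }
  assert (Hval : forall (I : nat -> Qc) v, v < N * Km ->
     seq_env M Km I (fun q t => b (h (t / m) q) (t mod m)) v = seq_env M m (Is I) b (tau v)
     /\ tau v < (K * N) * m).
  { intros I0 v Hv. destruct (Hdec v Hv) as (s & l & r & Hs & Hl & Hr & Ev & E1 & E2 & E3 & E4).
    unfold seq_env, tau, Is. rewrite E1, E2, E3, E4.
    rewrite Nat.mul_comm with (n := m) in *.
    pose proof (divmod_unique m (l * N + s) r Hr) as [D1 D2].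
    rewrite D1, D2.
    pose proof (divmod_unique N l s Hs) as [D3 D4]. rewrite D3, D4.
    split; [reflexivity|]. nia. }
  assert (Hinc2 : forall I : nat -> Qc, increasing_upto N I -> increasing_upto (K * N) (Is I)).
  { intros I0 HI0 t t' Htt' Ht'. unfold Is.
    assert (HN : 0 < N) by nia.
    pose proof (Nat.div_mod t N ltac:(lia)) as Et.
    pose proof (Nat.div_mod t' N ltac:(lia)) as Et'.
    pose proof (Nat.mod_upper_bound t N ltac:(lia)).
    pose proof (Nat.mod_upper_bound t' N ltac:(lia)).
    assert (Hl' : t' / N < K) by (apply Nat.Div0.div_lt_upper_bound; lia).
    assert (Hle : t / N <= t' / N) by (apply Nat.Div0.div_le_mono; lia).
    destruct (Nat.eq_dec (t / N) (t' / N)) as [Heq|Hne].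
    - rewrite Heq. apply Hinc; auto. apply HI0; nia.
    - apply Hsep; lia. }
  assert (Hchain : forall I : nat -> Qc,
    sat M (seq_env M Km I (fun q t => b (h (t / m) q) (t mod m))) psi <->
    sat M (seq_env M m (Is I) b) (frename tau psi)).
  { intro I0. rewrite sat_rename. apply (sat_agree M psi (N * Km)); auto.
    intros v Hv. apply Hval; auto. }
  fold Km. rewrite (Hchain I), (Hchain J).
  apply (Hb (K * N)); auto.
  apply fbound_rename with (N := N * Km); auto.
  intros v Hv. destruct (Hval I v Hv); auto.
Qed.

End Gen.

Open Scope R_scope.

Lemma rho_exists (P : list (R * R)) : exists rho, 0 < rho /\
  forall x y, In (x, y) P -> x <> y -> 4 * rho < Rabs (x - y).
Proof.
  induction P as [|[x y] P IH].
  - exists 1. split; [lra|]. intros x y [].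
  - destruct IH as [r0 [Hr0 H0]].
    destruct (Req_dec x y) as [Exy|Nxy].
    + exists r0. split; auto. intros x' y' [E|Hin] Hne; auto. inversion E; subst. contradiction.
    + assert (0 < Rabs (x - y)) by (apply Rabs_pos_lt; lra).
      exists (Rmin r0 (Rabs (x - y) / 8)). split.
      * apply Rmin_glb_lt; lra.
      * intros x' y' [E|Hin] Hne.
        -- inversion E; subst. assert (Rmin r0 (Rabs (x' - y') / 8) <= Rabs (x' - y') / 8) by apply Rmin_r. lra.
        -- specialize (H0 x' y' Hin Hne). assert (Rmin r0 (Rabs (x - y) / 8) <= r0) by apply Rmin_l. lra.
Qed.

Lemma count_points (C : list R) (n : nat) :
  (forall j, (j <= n)%nat -> exists y, In y C /\ 10 * INR j - 1 <= y <= 10 * INR j + 1) ->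
  (S n <= length C)%nat.
Proof.
  intro H.
  assert (G : forall N, (N <= S n)%nat -> exists l, length l = N /\ NoDup l /\ incl l C /\
     forall y, In y l -> y < 10 * INR N - 1).
  { induction N; intros HN.
    - exists []. split; [reflexivity|]. split; [constructor|]. split; intros y [].
    - destruct IHN as [l [H1 [H2 [H3 H4]]]]; [lia|].
      destruct (H N ltac:(lia)) as [y [Hy1 Hy2]].
      exists (y :: l). repeat split.
      + simpl; lia.
      + constructor; auto. intro Hin. specialize (H4 y Hin). lra.
      + intros z [<-|Hz]; auto.
      + rewrite S_INR. intros z [<-|Hz]; [lra|]. specialize (H4 z Hz). lra. }
  destruct (G (S n) (Nat.le_refl _)) as [l [H1 [H2 [H3 _]]]].
  rewrite <- H1. apply NoDup_incl_length; auto.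
Qed.

Open Scope R_scope.

Definition fv {L} (M : Structure L) k (a : nat -> M) (b : Qc -> nat -> M) psi q :=
  sat M (env k a (b q)) psi.
Definition brk {L} (M : Structure L) k (a : nat -> M) (b : Qc -> nat -> M) psi c :=
  forall eps, 0 < eps -> exists u u' : Qc, Rabs (QcR u - c) < eps /\ Rabs (QcR u' - c) < eps /\
    ~ (fv M k a b psi u <-> fv M k a b psi u').
Definition Br {L} (M : Structure L) k (a : nat -> M) m (b : Qc -> nat -> M) c :=
  exists psi, fbound (k + m) psi /\ brk M k a b psi c.

Lemma zone_lemma (f : Qc -> Prop) (C : list R) (c rho : R) :
  (forall q q', simC C q q' -> (f q <-> f q')) ->
  (forall x, In x C -> x <> c -> 4 * rho < Rabs (x - c)) ->
  forall q q', ((c < QcR q < c + 4 * rho /\ c < QcR q' < c + 4 * rho) \/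
                (c - 4 * rho < QcR q < c /\ c - 4 * rho < QcR q' < c) \/ QcR q = QcR q') ->
   (f q <-> f q').
Proof.
  intros HC Hr q q' Hq. apply HC.
  destruct Hq as [Hq|[Hq|Hq]]; [| |now apply simC_eq].
  all: apply simC_sep; intros x Hx; destruct (Req_dec x c) as [->|Hne]; [lra|];
    specialize (Hr x Hx Hne); unfold Rabs in Hr; destruct (Rcase_abs (x - c)); lra.
Qed.

Lemma claim1 {L} (M : Structure L) k (p : ptype M) n
  (Hloc : forall m phi, fbound (k + m) phi -> local_dp_rank_le M k m phi p n)
  (a : nat -> M) (Ha : realizes M k p a) m (Hm : (0 < m)%nat) (b : Qc -> nat -> M)
  (Hb : indiscernible M m b) (c : nat -> R)
  (Hc : forall j l, (j < l)%nat -> (l <= n)%nat -> c j < c l)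
  (Hbr : forall j, (j <= n)%nat -> Br M k a m b (c j)) : False.
Proof.
  assert (H1 : forall j, exists psi, (j <= n)%nat -> fbound (k + m) psi /\ brk M k a b psi (c j)).
  { intro j. destruct (le_lt_dec j n) as [Hj|Hj].
    - destruct (Hbr j Hj) as [psi Hpsi]. exists psi; auto.
    - exists FFalse. intro; lia. }
  set (psi := fun j => proj1_sig (constructive_indefinite_description _ (H1 j))).
  assert (Hpsi : forall j, (j <= n)%nat -> fbound (k + m) (psi j) /\ brk M k a b (psi j) (c j)).
  { intro j. exact (proj2_sig (constructive_indefinite_description _ (H1 j))). }
  clearbody psi.
  assert (H2 : forall j, exists C, (j <= n)%nat -> forall q q', simC C q q' ->
             (fv M k a b (psi j) q <-> fv M k a b (psi j) q')).
  { intro j. destruct (le_lt_dec j n) as [Hj|Hj].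
    - destruct (Hloc m (psi j) (proj1 (Hpsi j Hj)) a Ha b Hb) as [C [_ HC]].
      exists C. intros _. exact HC.
    - exists nil. intro; lia. }
  set (Cs := fun j => proj1_sig (constructive_indefinite_description _ (H2 j))).
  assert (HCs : forall j, (j <= n)%nat -> forall q q', simC (Cs j) q q' ->
             (fv M k a b (psi j) q <-> fv M k a b (psi j) q')).
  { intro j. exact (proj2_sig (constructive_indefinite_description _ (H2 j))). }
  clearbody Cs.
  destruct (rho_exists (flat_map (fun j => map (fun x => (x, c j)) (Cs j ++ map c (seq 0 (S n))))
                         (seq 0 (S n)))) as [rho [Hrho Hrho']].
  assert (HrC : forall j, (j <= n)%nat -> forall x, In x (Cs j) -> x <> c j -> 4 * rho < Rabs (x - c j)).
  { intros j Hj x Hx Hne. apply Hrho'; auto. apply in_flat_map. exists j. split.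
    - apply in_seq; lia.
    - apply in_map_iff. exists x. split; auto. apply in_or_app; auto. }
  assert (Hrc : forall j l, (j < l)%nat -> (l <= n)%nat -> c j + 4 * rho < c l).
  { intros j l Hjl Hl. assert (Hlt := Hc j l Hjl Hl).
    assert (4 * rho < Rabs (c j - c l)).
    { apply Hrho'; [|lra]. apply in_flat_map. exists l. split.
      - apply in_seq; lia.
      - apply in_map_iff. exists (c j). split; auto. apply in_or_app; right.
        apply in_map. apply in_seq; lia. }
    unfold Rabs in H; destruct (Rcase_abs (c j - c l)); lra. }
  destruct (Q_dense 0 rho Hrho) as [beta [Hb1 Hb2]].
  set (B := Q2R beta) in *.
  assert (H3 : forall j, exists al : Q, Rabs (Q2R al - c j) < B / 4 /\
              ((exists r : Q, Q2R r = c j) -> Q2R al = c j)).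
  { intro j. destruct (classic (exists r : Q, Q2R r = c j)) as [[r Hr]|Hn].
    - exists r. split; [rewrite Hr, Rminus_diag, Rabs_R0; lra|auto].
    - destruct (Q_dense (c j - B / 4) (c j + B / 4)) as [al Hal]; [lra|].
      exists al. split; [|intro; contradiction]. apply Rabs_def1; lra. }
  set (al := fun j => proj1_sig (constructive_indefinite_description _ (H3 j))).
  assert (Hal : forall j, Rabs (Q2R (al j) - c j) < B / 4 /\
              ((exists r : Q, Q2R r = c j) -> Q2R (al j) = c j)).
  { intro j. exact (proj2_sig (constructive_indefinite_description _ (H3 j))). }
  clearbody al.
  set (h := fun (l : nat) (q : Qc) =>
        Q2Qc (al l + beta * Gq (this q - inject_Z (Z.of_nat (10 * l))))%Q).
  assert (Hh : forall l q, QcR (h l q) = Q2R (al l) + B * Gr (QcR q - 10 * INR l)).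
  { intros l q. unfold h. rewrite QcR_Q2Qc, Q2R_plus, Q2R_mult, Q2R_Gq, Q2R_minus, Q2R_inject.
    rewrite mult_INR. replace (INR 10) with 10 by (simpl; lra). reflexivity. }
  assert (Hrange : forall l q, c l - 5 * B / 4 < QcR (h l q) < c l + 5 * B / 4).
  { intros l q. rewrite Hh. destruct (Hal l) as [Ha1 _]. apply Rabs_def2 in Ha1.
    pose proof (Gr_bounds (QcR q - 10 * INR l)). nra. }
  clearbody h.
  assert (Hinc : forall l q q', (l < S n)%nat -> Qclt q q' -> Qclt (h l q) (h l q')).
  { intros l q q' _ Hqq. apply Qclt_R. rewrite !Hh.
    apply Qlt_Rlt in Hqq. change (QcR q < QcR q') in Hqq.
    pose proof (Gr_mono (QcR q - 10 * INR l) (QcR q' - 10 * INR l) ltac:(lra)). nra. }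
  assert (Hsep : forall l l' q q', (l < l')%nat -> (l' < S n)%nat -> Qclt (h l q) (h l' q')).
  { intros l l' q q' Hll Hl'. apply Qclt_R.
    pose proof (Hrange l q). pose proof (Hrange l' q'). pose proof (Hrc l l' Hll ltac:(lia)). lra. }
  set (b' := fun q t => b (h (t / m)%nat q) (t mod m)%nat).
  assert (Hb' : indiscernible M (S n * m) b').
  { apply indisc_blocks; auto. }
  set (sg := fun (l v : nat) => if (v <? k)%nat then v else (v + l * m)%nat).
  set (g := fun l => frename (sg l) (psi l)).
  set (Psi := PsiN g (S n)).
  assert (HPsib : fbound (k + S n * m) Psi).
  { apply PsiN_bound. intros l Hl. unfold g. apply fbound_rename with (N := (k + m)%nat).
    - apply Hpsi; lia.
    - intros v Hv. unfold sg. destruct (Nat.ltb_spec v k); nia. }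
  assert (Hcomp : forall l q, (l < S n)%nat ->
            (sat M (env k a (b' q)) (g l) <-> fv M k a b (psi l) (h l q))).
  { intros l q Hl. unfold g, fv. rewrite sat_rename.
    apply (sat_agree M (psi l) (k + m)). { apply Hpsi; lia. }
    intros v Hv. unfold env, sg, b'. destruct (Nat.ltb_spec v k) as [Hvk|Hvk].
    - destruct (Nat.ltb_spec v k); [reflexivity|lia].
    - destruct (Nat.ltb_spec (v + l * m) k); [lia|].
      replace (v + l * m - k)%nat with (l * m + (v - k))%nat by lia.
      destruct (divmod_unique m l (v - k) ltac:(lia)) as [D1 D2]. rewrite D1, D2. reflexivity. }
  destruct (Hloc (S n * m)%nat Psi HPsib a Ha b' Hb') as [C [HlenC HC]].
  assert (Hpts : forall j, (j <= n)%nat -> exists y, In y C /\ 10 * INR j - 1 <= y <= 10 * INR j + 1).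
  { intros j Hj.
    set (Win := fun w => 10 * INR j - 1 <= QcR w <= 10 * INR j + 1).
    assert (Hright : forall l w, (l < j)%nat -> Win w -> c l < QcR (h l w) < c l + 4 * rho).
    { intros l w Hl Hw. unfold Win in Hw.
      assert (INR l + 1 <= INR j) by (rewrite <- S_INR; apply le_INR; lia).
      pose proof (Gr_big (QcR w - 10 * INR l) ltac:(lra)).
      pose proof (Gr_bounds (QcR w - 10 * INR l)).
      destruct (Hal l) as [Ha1 _]. apply Rabs_def2 in Ha1. rewrite Hh. nra. }
    assert (Hleft : forall l w, (j < l)%nat -> Win w -> c l - 4 * rho < QcR (h l w) < c l).
    { intros l w Hl Hw. unfold Win in Hw.
      assert (INR j + 1 <= INR l) by (rewrite <- S_INR; apply le_INR; lia).
      pose proof (Gr_small (QcR w - 10 * INR l) ltac:(lra)).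
      pose proof (Gr_bounds (QcR w - 10 * INR l)).
      destruct (Hal l) as [Ha1 _]. apply Rabs_def2 in Ha1. rewrite Hh. nra. }
    assert (Hoth : forall l w w', (l <= n)%nat -> l <> j -> Win w -> Win w' ->
              (fv M k a b (psi l) (h l w) <-> fv M k a b (psi l) (h l w'))).
    { intros l w w' Hl Hlj Hw Hw'.
      apply (zone_lemma _ (Cs l) (c l) rho (HCs l Hl) (HrC l Hl)).
      destruct (lt_dec l j) as [Hlt|Hge].
      - left. split; apply Hright; auto.
      - right; left. split; apply Hleft; auto; lia. }
    set (Z10 := inject_Z (Z.of_nat (10 * j))).
    assert (HZ : Q2R Z10 = 10 * INR j).
    { unfold Z10. rewrite Q2R_inject, mult_INR. replace (INR 10) with 10 by (simpl; lra). reflexivity. }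
    assert (Hrep : forall u0, Rabs (QcR u0 - c j) < rho -> exists w : Qc, Win w /\
               (fv M k a b (psi j) u0 <-> fv M k a b (psi j) (h j w))).
    { intros u0 Hu0. apply Rabs_def2 in Hu0.
      destruct (Hal j) as [Ha1 Ha2]. apply Rabs_def2 in Ha1.
      destruct (Rtotal_order (QcR u0) (c j)) as [Hlt|[Heq|Hgt]].
      - exists (Q2Qc (Z10 - 1)).
        assert (E : QcR (Q2Qc (Z10 - 1)) = 10 * INR j - 1)
          by (rewrite QcR_Q2Qc, Q2R_minus, HZ, Q2R_1; reflexivity).
        split; [unfold Win; rewrite E; lra|].
        apply (zone_lemma _ (Cs j) (c j) rho (HCs j Hj) (HrC j Hj)).
        right; left. rewrite Hh, E. replace (10 * INR j - 1 - 10 * INR j) with (-1) by ring.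
        rewrite Gr_m1. lra.
      - exists (Q2Qc Z10).
        assert (E : QcR (Q2Qc Z10) = 10 * INR j) by (rewrite QcR_Q2Qc, HZ; reflexivity).
        split; [unfold Win; rewrite E; lra|].
        apply (zone_lemma _ (Cs j) (c j) rho (HCs j Hj) (HrC j Hj)).
        right; right. rewrite Hh, E. replace (10 * INR j - 10 * INR j) with 0 by ring.
        rewrite Gr_0, Ha2; [lra|]. exists (this u0). exact Heq.
      - exists (Q2Qc (Z10 + 1)).
        assert (E : QcR (Q2Qc (Z10 + 1)) = 10 * INR j + 1)
          by (rewrite QcR_Q2Qc, Q2R_plus, HZ, Q2R_1; reflexivity).
        split; [unfold Win; rewrite E; lra|].
        apply (zone_lemma _ (Cs j) (c j) rho (HCs j Hj) (HrC j Hj)).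
        left. rewrite Hh, E. replace (10 * INR j + 1 - 10 * INR j) with 1 by ring.
        rewrite Gr_1. lra. }
    destruct (proj2 (Hpsi j Hj) rho Hrho) as [u [u' [Hu [Hu' Hdiff]]]].
    destruct (Hrep u Hu) as [w1 [Hw1 E1]]. destruct (Hrep u' Hu') as [w2 [Hw2 E2]].
    assert (Hd : ~ (fv M k a b (psi j) (h j w1) <-> fv M k a b (psi j) (h j w2))) by tauto.
    destruct (PsiN_diff M (env k a (b' w1)) (env k a (b' w2)) g j (S n)) as [HA _].
    - intros l Hl Hlj. rewrite !Hcomp by lia. apply Hoth; auto; lia.
    - intros _. rewrite !Hcomp by lia. exact Hd.
    - specialize (HA ltac:(lia)).
      assert (Hns : ~ simC C w1 w2) by (intro Hs; apply HA; exact (HC w1 w2 Hs)).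
      destruct (not_simC _ _ _ Hns) as [y [Hy1 Hy2]]. exists y. split; auto.
      unfold Win in *; lra. }
  pose proof (count_points C n Hpts). lia.
Qed.

Open Scope R_scope.

Lemma ex_max (P : nat -> Prop) n : P 0%nat -> (forall L, P L -> (L <= n)%nat) ->
  exists L, P L /\ forall L', P L' -> (L' <= L)%nat.
Proof.
  revert P. induction n; intros P H0 Hb.
  - exists 0%nat. split; auto.
  - destruct (classic (P (S n))) as [HS|HS].
    + exists (S n). split; auto.
    + apply IHn; auto. intros L HL. specialize (Hb L HL).
      destruct (Nat.eq_dec L (S n)); [subst; contradiction|lia].
Qed.

Lemma ins_pos (c : nat -> R) L x :
  (forall j l, (j < l)%nat -> (l < L)%nat -> c j < c l) -> (forall j, (j < L)%nat -> c j <> x) ->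
  exists p, (p <= L)%nat /\ (forall j, (j < p)%nat -> c j < x) /\
            (forall j, (p <= j)%nat -> (j < L)%nat -> x < c j).
Proof.
  induction L; intros Hinc Hne.
  - exists 0%nat. repeat split; intros; lia.
  - destruct IHL as [p [Hp [H1 H2]]].
    + intros; apply Hinc; lia.
    + intros; apply Hne; lia.
    + destruct (Rlt_le_dec x (c L)) as [Hx|Hx].
      * exists p. repeat split; auto; try lia. intros j Hj1 Hj2.
        destruct (Nat.eq_dec j L) as [->|]; auto. apply H2; lia.
      * assert (Hx' : c L < x) by (assert (c L <> x) by (apply Hne; lia); lra).
        exists (S L). repeat split; try lia.
        intros j Hj. destruct (Nat.eq_dec j L) as [->|]; auto.
        destruct (lt_dec j p); [apply H1; lia|].
        assert (p = L).
        { destruct (Nat.eq_dec p L); auto. exfalso.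
          specialize (H2 p ltac:(lia) ltac:(lia)). specialize (Hinc p L ltac:(lia) ltac:(lia)). lra. }
        subst. lia.
Qed.

Lemma cover (Br : R -> Prop) n
  (Hno : forall c : nat -> R, (forall j l, (j < l)%nat -> (l <= n)%nat -> c j < c l) ->
         (forall j, (j <= n)%nat -> Br (c j)) -> False) :
  exists B : list R, (length B <= n)%nat /\ forall x, Br x -> In x B.
Proof.
  set (P := fun L => exists c : nat -> R, (forall j l, (j < l)%nat -> (l < L)%nat -> c j < c l) /\
                                   (forall j, (j < L)%nat -> Br (c j))).
  assert (HP0 : P 0%nat) by (exists (fun _ => 0); split; intros; lia).
  assert (HPb : forall L, P L -> (L <= n)%nat).
  { intros L [c [H1 H2]]. destruct (le_lt_dec L n); auto. exfalso.
    apply (Hno c); intros; [apply H1|apply H2]; lia. }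
  destruct (ex_max P n HP0 HPb) as [L [[c [Hc1 Hc2]] Hmax]].
  exists (map c (seq 0 L)). split.
  - rewrite length_map, length_seq. apply HPb. exists c; auto.
  - intros x Hx. apply NNPP. intro Hn.
    assert (Hne : forall j, (j < L)%nat -> c j <> x).
    { intros j Hj E. apply Hn. rewrite <- E. apply in_map. apply in_seq; lia. }
    destruct (ins_pos c L x Hc1 Hne) as [p [Hp [H1 H2]]].
    set (c' := fun j => if (j <? p)%nat then c j else if (j =? p)%nat then x else c (j - 1)%nat).
    assert (HS : P (S L)).
    { exists c'. split.
      - intros j l Hjl Hl. unfold c'.
        destruct (Nat.ltb_spec j p); destruct (Nat.ltb_spec l p);
        destruct (Nat.eqb_spec j p); destruct (Nat.eqb_spec l p); try lia;
        first [apply Hc1; lia | apply H1; lia | apply H2; lia |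
               (eapply Rlt_trans; [apply H1; lia| apply H2; lia])].
      - intros j Hj. unfold c'.
        destruct (Nat.ltb_spec j p); [apply Hc2; lia|].
        destruct (Nat.eqb_spec j p); [auto|apply Hc2; lia]. }
    specialize (Hmax _ HS). lia.
Qed.

Open Scope R_scope.

Lemma a2_step (f : Qc -> Prop) (c : R) (D : list R) :
  (forall q q', simC (c :: D) q q' -> (f q <-> f q')) ->
  (exists eps, 0 < eps /\ forall u u', Rabs (QcR u - c) < eps -> Rabs (QcR u' - c) < eps -> (f u <-> f u')) ->
  forall q q', simC D q q' -> (f q <-> f q').
Proof.
  intros H [eps [He Heps]].
  assert (key : forall q q', simC D q q' -> QcR q < QcR q' -> (f q <-> f q')).
  { intros q q' Hs Hlt. pose proof (simC_between D q q' Hs Hlt) as Hout.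
    destruct (Rlt_le_dec c (QcR q)) as [Hc1|Hc1].
    { apply H. apply simC_sep. intros x [<-|Hx]; [lra|]. destruct (Hout x Hx); lra. }
    destruct (Rlt_le_dec (QcR q') c) as [Hc2|Hc2].
    { apply H. apply simC_sep. intros x [<-|Hx]; [lra|]. destruct (Hout x Hx); lra. }
    assert (Hu : exists u, (f q <-> f u) /\ Rabs (QcR u - c) < eps /\ QcR q <= QcR u <= c).
    { destruct (Req_dec (QcR q) c) as [Eq|Nq].
      - exists q. split; [tauto|]. split; [rewrite Eq, Rminus_diag, Rabs_R0; lra|lra].
      - destruct (Qc_dense (Rmax (QcR q) (c - eps)) c) as [u Hu].
        { apply Rmax_lub_lt; lra. }
        pose proof (Rmax_l (QcR q) (c - eps)). pose proof (Rmax_r (QcR q) (c - eps)).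
        exists u. split; [|split; [apply Rabs_def1; lra|lra]].
        apply H. apply simC_sep. intros x [<-|Hx]; [lra|]. destruct (Hout x Hx); lra. }
    assert (Hv : exists v, (f v <-> f q') /\ Rabs (QcR v - c) < eps /\ c <= QcR v <= QcR q').
    { destruct (Req_dec (QcR q') c) as [Eq|Nq].
      - exists q'. split; [tauto|]. split; [rewrite Eq, Rminus_diag, Rabs_R0; lra|lra].
      - destruct (Qc_dense c (Rmin (QcR q') (c + eps))) as [v Hv].
        { apply Rmin_glb_lt; lra. }
        pose proof (Rmin_l (QcR q') (c + eps)). pose proof (Rmin_r (QcR q') (c + eps)).
        exists v. split; [|split; [apply Rabs_def1; lra|lra]].
        apply H. apply simC_sep. intros x [<-|Hx]; [lra|]. destruct (Hout x Hx); lra. }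
    destruct Hu as [u [E1 [Hu1 _]]]. destruct Hv as [v [E2 [Hv1 _]]].
    pose proof (Heps u v Hu1 Hv1). tauto. }
  intros q q' Hs. destruct (Rtotal_order (QcR q) (QcR q')) as [Hlt|[Heq|Hgt]].
  - auto.
  - apply H. apply simC_eq; auto.
  - symmetry. apply key; auto. apply simC_sym; auto.
Qed.

Lemma a2 (f : Qc -> Prop) (B : list R) : forall C',
  (forall q q', simC (C' ++ B) q q' -> (f q <-> f q')) ->
  (forall c, In c C' -> ~ In c B -> exists eps, 0 < eps /\
      forall u u', Rabs (QcR u - c) < eps -> Rabs (QcR u' - c) < eps -> (f u <-> f u')) ->
  forall q q', simC B q q' -> (f q <-> f q').
Proof.
  induction C' as [|c C' IH]; intros H Hnb.
  - exact H.
  - apply IH.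
    + destruct (classic (In c B)) as [HB|HB].
      * intros q q' Hs. apply H. intros x [<-|Hx]; apply Hs; auto. apply in_or_app; auto.
      * apply (a2_step f c (C' ++ B)); auto. apply Hnb; simpl; auto.
    + intros c0 Hc0 Hn. apply Hnb; simpl; auto.
Qed.

Open Scope nat_scope.

Theorem proposition2p3 (L : Lang) (M : Structure L) (k : nat) (p : ptype M) (n : nat) :
  dp_rank_le M k p n <->
  (forall (m : nat) (phi : formula L), fbound (k + m) phi -> local_dp_rank_le M k m phi p n).
Proof.
  split.
  - intros Hdp m phi Hphi a Ha b Hb.
    destruct (Hdp a Ha m b Hb) as [C [Hl HC]]. exists C. split; auto.
    intros i j Hs. apply (HC i j Hs); auto.
  - intros Hloc a Ha m b Hb.
    destruct (Nat.eq_dec m 0) as [Hm0|Hm].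
    { subst m. exists nil. split; [simpl; apply Nat.le_0_l|].
      intros i j _ psi Hpsi. apply (sat_agree M psi (k + 0)); auto.
      intros v Hv. unfold env. destruct (Nat.ltb_spec v k); [reflexivity|lia]. }
    destruct (cover (Br M k a m b) n) as [B [HB1 HB2]].
    { intros c Hc Hbr. apply (claim1 M k p n Hloc a Ha m ltac:(lia) b Hb c Hc Hbr). }
    exists B. split; auto.
    intros i j Hs psi Hpsi.
    destruct (Hloc m psi Hpsi a Ha b Hb) as [C [_ HC]].
    apply (a2 (fv M k a b psi) B C); auto.
    + intros q q' Hq. apply HC. intros x Hx. apply Hq. apply in_or_app; auto.
    + intros c Hc HnB. apply NNPP. intro Hne. apply HnB. apply HB2.
      exists psi. split; auto. intros eps Heps. apply NNPP. intro Hn2. apply Hne.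
      exists eps. split; auto. intros u u' Hu Hu'. apply NNPP. intro Hn3. apply Hn2.
      exists u, u'. auto.
Qed.
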